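(* Let $G$ be a connected graph, $c\in V(G)$, and run the scan procedure at $c$ (with any processing order). Let $e$ and $f$ be distinct edges incident to $c$. Then $(e,f)\in(\overline{\alpha}_c\cup\beta_c)^*$ if and only if $(e,f)\in\mathfrak d_c^*$.
   Context: All graphs are finite, simple, undirected; $N(x)$ is the open neighborhood of $x$. For distinct edges $e=vu$, $f=vw$ sharing the vertex $v$, a square spanned by $e$ and $f$ is a 4-cycle $vuxw$ with $x\ne v$ adjacent to both $u$ and $w$; $x$ is its top vertex. The square is chordless if it is an induced 4-cycle ($uw\notin E$, $vx\notin E$); its opposite edge pairs are $\{vu,wx\}$ and $\{vw,ux\}$. The edges $e,f$ span a unique square if $|N(u)\cap N(w)|=2$. A top vertex $x$ is unique if $|N(x)\cap N(v)|=2$. The relation $\delta_G$ on $E(G)$: $(e,f)\in\delta_G$ iff (i) $e,f$ are distinct adjacent edges and it is not the case that they span a unique square and that square is chordless; or (ii) $e,f$ are opposite edges of a chordless square; or (iii) $e=f$. For $v\in V(G)$, $E_v$ is the set of edges incident to $v$, and $\mathfrak d_v=((E_v\times E)\cup(E\times E_v))\cap\delta_G$; $\mathfrak d_v^*$ is its transitive closure (on $E(G)$). Scan procedure at $c$: the vertices of $N(c)$ are called primal, and edges incident to $c$ primal edges. Maintain two sets $I$ (incidence list) and $A$ (absence list) of unordered pairs of primal edges, both initially empty, and for every non-primal vertex $w\ne c$ a record of at most two ''recorded primal neighbors'' (first and second), initially none. Process the neighbors $u$ of $c$ one by one in an arbitrary order, and for each such $u$ process its neighbors $w\neq c$ in an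 arbitrary order: (1) if $w\in N(c)$, add $\{cu,cw\}$ to $A$; (2) else, if $w$ has no recorded primal neighbor, record $u$ as its first primal neighbor; (3) else, if $w$ has exactly one recorded primal neighbor $v$, record $u$ as its second primal neighbor, and if $\{cu,cv\}\notin I$ add $\{cu,cv\}$ to $I$, otherwise add $\{cu,cv\}$ to $A$; (4) else ($w$ has recorded first and second primal neighbors $v_1,v_2$) add $\{cv_1,cv_2\},\{cv_1,cu\},\{cv_2,cu\}$ to $A$ (the record is not changed). After the procedure, $\beta_c$ is the symmetric relation on primal edges consisting of the pairs in $A$, and $\overline{\alpha}_c$ the symmetric relation consisting of all pairs of primal edges not in $I$. $(\overline{\alpha}_c\cup\beta_c)^*$ denotes the transitive closure of their union (a relation on primal edges). *)

(* Defs.v *)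
(* Simple graph = symmetric irreflexive relation adj on a finType T.
   Edges are 2-element vertex sets {x,y} : {set T} with adj x y. *)
From mathcomp Require Import all_boot.
Set Implicit Arguments. Unset Strict Implicit. Unset Printing Implicit Defensive.

Section Graph.
Variables (T : finType) (adj : rel T).

Definition nbr (x : T) : {set T} := [set y | adj x y].

Definition is_edge (e : {set T}) : bool :=
  [exists x, exists y, adj x y && (e == [set x; y])].

(* e = vu, f = vw span a unique square (|N(u) ∩ N(w)| = 2) and that square
   v u x w (x the other common neighbour) is chordless *)
Definition unique_chordless (v u w : T) : bool :=
  (#|nbr u :&: nbr w| == 2) &&
  [exists x, [&& x \in nbr u :&: nbr w, x != v, ~~ adj u w & ~~ adj v x]].

Definition delta_i (e f : {set T}) : bool :=
  (e != f) &&
  [exists v, exists u, exists w,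
     [&& adj v u, adj v w, e == [set v; u], f == [set v; w]
       & ~~ unique_chordless v u w]].

Definition chordless_square (v u x w : T) : bool :=
  [&& adj v u, adj u x, adj x w, adj w v, x != v, u != w,
      ~~ adj u w & ~~ adj v x].

Definition delta_ii (e f : {set T}) : bool :=
  [exists v, exists u, exists x, exists w,
     [&& chordless_square v u x w, e == [set v; u] & f == [set w; x]]].

Definition delta (e f : {set T}) : bool :=
  [&& is_edge e, is_edge f & [|| delta_i e f, delta_ii e f | e == f]].

Definition dv (v : T) (e f : {set T}) : bool :=
  delta e f && ((v \in e) || (v \in f)).

(* transitive closure d_v^*; for distinct e f, connect coincides with it *)
Definition dv_star (v : T) : rel {set T} := connect (dv v).

Variable c : T.

Definition pe (u : T) : {set T} := [set c; u].
Definition ppair (u v : T) : {set {set T}} := [set pe u; pe v].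

Record scan_state := ScanState {
  sI : {set {set {set T}}};
  sA : {set {set {set T}}};
  srec : T -> seq T           (* recorded primal neighbours (first, second) *)
}.

Definition scan_init : scan_state := ScanState set0 set0 (fun _ => [::]).

Definition upd (r : T -> seq T) (w : T) (s : seq T) : T -> seq T :=
  fun y => if y == w then s else r y.

(* processing neighbour w (<> c) of the primal vertex u *)
Definition scan_step (st : scan_state) (p : T * T) : scan_state :=
  let: (u, w) := p in
  if adj c w then ScanState (sI st) (ppair u w |: sA st) (srec st)
  else match srec st w with
  | [::] => ScanState (sI st) (sA st) (upd (srec st) w [:: u])
  | [:: v] =>
      if ppair u v \notin sI st
      then ScanState (ppair u v |: sI st) (sA st) (upd (srec st) w [:: v; u])
      else ScanState (sI st) (ppair u v |: sA st) (upd (srec st) w [:: v; u])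
  | v1 :: v2 :: _ =>
      ScanState (sI st)
        (ppair v1 v2 |: (ppair v1 u |: (ppair v2 u |: sA st))) (srec st)
  end.

(* ord : processing order of N(c); nb u : processing order of N(u) \ {c} *)
Definition scan (ord : seq T) (nb : T -> seq T) : scan_state :=
  foldl scan_step scan_init [seq (u, w) | u <- ord, w <- nb u].

Definition valid_order (ord : seq T) (nb : T -> seq T) : Prop :=
  [/\ uniq ord, (forall u, (u \in ord) = adj c u)
    & forall u, adj c u ->
        uniq (nb u) /\ (forall w, (w \in nb u) = adj u w && (w != c))].

Definition primal (e : {set T}) : bool := [exists u, adj c u && (e == pe u)].

(* beta_c ∪ (alpha_c-bar), as a relation on primal edges *)
Definition alpha_beta (st : scan_state) (e f : {set T}) : bool :=
  [&& primal e, primal f &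
      ([set e; f] \notin sI st) || ([set e; f] \in sA st)].

End Graph.

(* Main.v *)
Require Import Defs.
From mathcomp Require Import all_boot.
Set Implicit Arguments. Unset Strict Implicit. Unset Printing Implicit Defensive.

Section Pf.
Variables (T : finType) (adj : rel T).
Hypothesis sym : symmetric adj.
Hypothesis irr : irreflexive adj.
Variable c : T.

Lemma adj_neq x y : adj x y -> x != y.
Proof. by apply: contraTneq => ->; rewrite irr. Qed.

Lemma pe_inj u v : u != c -> pe c u = pe c v -> u = v.
Proof.
move=> uc E; have : u \in pe c v by rewrite -E !inE eqxx orbT.
by rewrite !inE (negbTE uc) => /eqP.
Qed.

Lemma mem_pp x a b : x != c -> pe c x \in ppair c a b -> x = a \/ x = b.
Proof.
move=> xc; rewrite !inE => /orP[] /eqP /(pe_inj xc); auto.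
Qed.

Lemma ppairC a b : ppair c a b = ppair c b a.
Proof. by rewrite /ppair setUC. Qed.

Lemma ppair_inj a b a' b' : a != c -> b != c -> a' != c -> b' != c ->
  ppair c a b = ppair c a' b' -> (a = a' /\ b = b') \/ (a = b' /\ b = a').
Proof.
move=> ac bc a'c b'c E.
have h1 := mem_pp ac (_ : pe c a \in ppair c a' b').
have h2 := mem_pp bc (_ : pe c b \in ppair c a' b').
have h3 := mem_pp a'c (_ : pe c a' \in ppair c a b).
have h4 := mem_pp b'c (_ : pe c b' \in ppair c a b).
rewrite -E !inE !eqxx ?orbT in h1 h2; rewrite E !inE !eqxx ?orbT in h3 h4.
case: (h1 erefl) => ea; case: (h2 erefl) => eb; subst; auto;
case: (h3 erefl) => ?; case: (h4 erefl) => ?; subst; auto.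
Qed.

Definition seen (ps : seq (T * T)) (w : T) : seq T :=
  [seq p.1 | p <- ps & (p.2 == w) && ~~ adj c w].

Lemma mem_seen ps a w : (a \in seen ps w) = ((a, w) \in ps) && ~~ adj c w.
Proof.
apply/mapP/andP => [[[x y]] /=|[H1 H2]].
  by rewrite mem_filter /= => /andP[/andP[/eqP -> ->] ?] ->.
by exists (a, w); rewrite // mem_filter /= eqxx H2.
Qed.

Lemma seen_rcons ps p w : seen (rcons ps p) w =
  if (p.2 == w) && ~~ adj c w then rcons (seen ps w) p.1 else seen ps w.
Proof. by rewrite /seen filter_rcons; case: ifP => _; rewrite ?map_rcons. Qed.

Lemma seen_pre ps p w : exists t, seen (rcons ps p) w = seen ps w ++ t.
Proof.
rewrite seen_rcons; case: ifP => _; first by exists [:: p.1]; rewrite cats1.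
by exists [::]; rewrite cats0.
Qed.

Definition fp (s : seq T) := ppair c (nth c s 0) (nth c s 1).

Definition okp (p : T * T) := [&& adj c p.1, adj p.1 p.2 & p.2 != c].

Lemma seen_ok ps a w : all okp ps -> a \in seen ps w ->
  [/\ adj c a, adj a w, w != c & ~~ adj c w].
Proof.
move=> /allP H; rewrite mem_seen => /andP[/H /and3P[] ? ? ? ?]; by split.
Qed.

Definition good ps a b := [/\ a != c, b != c &
  adj a b \/ (exists x, 2 < size (seen ps x) /\ a \in seen ps x /\ b \in seen ps x)
  \/ (exists x1 x2, [/\ x1 != x2, a \in seen ps x1, b \in seen ps x1,
        a \in seen ps x2 & b \in seen ps x2])].

Lemma good_mono ps ps' a b : (forall x, exists t, seen ps' x = seen ps x ++ t) ->
  good ps a b -> good ps' a b.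
Proof.
move=> H [ac bc G]; split=> //.
case: G => [|[[x [s1 [s2 s3]]]|[x1 [x2 [n m1 m2 m3 m4]]]]]; auto.
  right; left; exists x; case: (H x) => t ->; rewrite size_cat !mem_cat s2 s3.
  by rewrite (leq_trans s1) ?leq_addr.
right; right; exists x1, x2; case: (H x1) => t1 ->; case: (H x2) => t2 ->.
by rewrite !mem_cat m1 m2 m3 m4.
Qed.

Lemma good_sym ps a b : good ps a b -> good ps b a.
Proof.
case=> ac bc [G|[[x [? [? ?]]]|[x1 [x2 [? ? ? ? ?]]]]]; split=> //.
- by left; rewrite sym.
- by right; left; exists x.
by right; right; exists x1, x2.
Qed.

Record inv ps (st : scan_state T) : Prop := Inv {
  i1 : forall w, srec st w = take 2 (seen ps w);
  i2 : forall x, 1 < size (seen ps x) -> fp (seen ps x) \in sI st;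
  i3 : forall q, q \in sI st -> exists x, 1 < size (seen ps x) /\ q = fp (seen ps x);
  i4 : forall q, q \in ps -> adj c q.2 -> ppair c q.1 q.2 \in sA st;
  i5 : forall x, 2 < size (seen ps x) -> forall a, a \in seen ps x ->
         a != nth c (seen ps x) 0 -> ppair c (nth c (seen ps x) 0) a \in sA st;
  i6 : forall x1 x2, x1 != x2 -> 1 < size (seen ps x1) -> 1 < size (seen ps x2) ->
         fp (seen ps x1) = fp (seen ps x2) -> fp (seen ps x1) \in sA st;
  i7 : forall q, q \in sA st -> exists a b, q = ppair c a b /\ good ps a b }.


Lemma fp_pre s t : 1 < size s -> fp (s ++ t) = fp s.
Proof. by move=> h; rewrite /fp !nth_cat h (ltn_trans _ h). Qed.

Lemma inv0 : inv [::] (scan_init T).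
Proof.
split=> //=.
- by move=> q; rewrite inE.
- by move=> q; rewrite inE.
Qed.

Lemma inv_step ps st u w : all okp (rcons ps (u, w)) -> inv ps st ->
  inv (rcons ps (u, w)) (scan_step adj c st (u, w)).
Proof.
rewrite all_rcons => /andP[/and3P[/= cu uw wc] okps] [I1 I2 I3 I4 I5 I6 I7].
have pre := seen_pre ps (u, w).
have sE x : seen (rcons ps (u, w)) x =
   if (w == x) && ~~ adj c x then rcons (seen ps x) u else seen ps x.
  exact: seen_rcons.
have uc : u != c by rewrite eq_sym adj_neq.
have I3m : forall q, q \in sI st -> exists x,
    1 < size (seen (rcons ps (u, w)) x) /\ q = fp (seen (rcons ps (u, w)) x).
  move=> q /I3 [x [sz ->]]; exists x; case: (pre x) => t ->.
  by rewrite fp_pre // size_cat (leq_trans sz) ?leq_addr.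
have G7 : forall q, q \in sA st -> exists a b, q = ppair c a b /\ good (rcons ps (u, w)) a b.
  by move=> q /I7 [a [b [-> G]]]; exists a, b; split=> //; apply: good_mono G.
have I4m : forall q, q \in rcons ps (u, w) -> adj c q.2 -> q != (u, w) ->
    ppair c q.1 q.2 \in sA st.
  move=> q; rewrite mem_rcons inE => /orP[/eqP -> _|qps cq _]; first by rewrite eqxx.
  exact: I4.
rewrite /scan_step /=; case: ifP => cw.
  have sE' x : seen (rcons ps (u, w)) x = seen ps x.
    by rewrite sE; case: (w =P x) => [<-|]; rewrite ?cw.
  split => /=.
  - by move=> x; rewrite sE'.
  - by move=> x; rewrite sE'; exact: I2.
  - by move=> q /I3 [x ?]; exists x; rewrite sE'.
  - move=> q qin cq; case: (q =P (u, w)) => [-> /=|/eqP qn]; first by rewrite !inE eqxx.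
    by rewrite inE I4m ?orbT.
  - by move=> x; rewrite !sE' => ? a ? ?; rewrite inE I5 ?orbT.
  - by move=> x1 x2; rewrite !sE' => n s1 s2 E; rewrite inE (I6 _ _ n s1 s2 E) orbT.
  - move=> q; rewrite !inE => /orP[/eqP ->|/G7 //].
    exists u, w; split=> //; split=> //; by left.
have sW : seen (rcons ps (u, w)) w = rcons (seen ps w) u by rewrite sE cw eqxx.
have sN x : x != w -> seen (rcons ps (u, w)) x = seen ps x.
  by move=> xw; rewrite sE eq_sym (negbTE xw).
rewrite I1; case Es: (seen ps w) => [|v1 [|v2 t]] /=.
- split=> /=.
  + move=> x; rewrite /upd; case: (x =P w) => [->|/eqP xw]; first by rewrite sW Es.
    by rewrite sN // I1.
  + move=> x; case: (x =P w) => [->|/eqP xw]; first by rewrite sW Es.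
    by rewrite sN //; exact: I2.
  + exact: I3m.
  + by move=> q qin cq; rewrite I4m //; apply: contraTneq cq => -> /=; rewrite cw.
  + move=> x; case: (x =P w) => [->|/eqP xw]; first by rewrite sW Es.
    by rewrite sN //; exact: I5.
  + move=> x1 x2; case: (x1 =P w) => [->|/eqP x1w]; first by rewrite sW Es.
    case: (x2 =P w) => [->|/eqP x2w]; first by rewrite sW Es.
    by rewrite !sN //; exact: I6.
  + exact: G7.
- have v1c : v1 != c.
    have : v1 \in seen ps w by rewrite Es inE.
    by case/(seen_ok okps) => ? _ _ _; rewrite eq_sym adj_neq.
  have Fw x : 1 < size (seen ps x) -> x != w.
    by move=> sz; apply: contraTneq sz => ->; rewrite Es.
  case: ifP => inI.
  + split=> /=.
    * move=> x; rewrite /upd; case: (x =P w) => [->|/eqP xw]; first by rewrite sW Es.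
      by rewrite sN // I1.
    * move=> x; case: (x =P w) => [->|/eqP xw].
        by rewrite sW Es /fp /= ppairC !inE eqxx.
      by rewrite sN // inE => /I2 ->; rewrite orbT.
    * move=> q; rewrite !inE => /orP[/eqP ->|/I3m //].
      by exists w; rewrite sW Es /fp /= ppairC.
    * by move=> q qin cq; rewrite I4m //; apply: contraTneq cq => -> /=; rewrite cw.
    * move=> x; case: (x =P w) => [->|/eqP xw]; first by rewrite sW Es.
      by rewrite sN //; exact: I5.
    * move=> x1 x2; case: (x1 =P w) => [->|/eqP x1w].
        rewrite sW Es => n _; rewrite sN 1?eq_sym // => /I2 h E.
        by rewrite -E /fp /= ppairC (negbTE inI) in h.
      case: (x2 =P w) => [->|/eqP x2w].
        rewrite sW Es sN // => _ /I2 h _ E.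
        by rewrite E /fp /= ppairC (negbTE inI) in h.
      by rewrite !sN //; exact: I6.
    * exact: G7.
  + move/negbFE: inI => inI.
    split=> /=.
    * move=> x; rewrite /upd; case: (x =P w) => [->|/eqP xw]; first by rewrite sW Es.
      by rewrite sN // I1.
    * move=> x; case: (x =P w) => [->|/eqP xw].
        by rewrite sW Es /fp /= ppairC.
      by rewrite sN //; exact: I2.
    * exact: I3m.
    * move=> q qin cq; rewrite inE I4m ?orbT //.
      by apply: contraTneq cq => -> /=; rewrite cw.
    * move=> x; case: (x =P w) => [->|/eqP xw]; first by rewrite sW Es.
      by rewrite sN // => ? a ? ?; rewrite inE I5 ?orbT.
    * move=> x1 x2; case: (x1 =P w) => [->|/eqP x1w].
        by rewrite sW Es /fp /= ppairC !inE eqxx.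
      case: (x2 =P w) => [->|/eqP x2w].
        by rewrite sW Es /fp /= => _ _ _ ->; rewrite ppairC !inE eqxx.
      by rewrite !sN // => n s1 s2 E; rewrite inE (I6 _ _ n s1 s2 E) orbT.
    * move=> q; rewrite !inE => /orP[/eqP ->|/G7 //].
      case: (I3 _ inI) => x [sz E]; have xw := Fw x sz.
      have m0 : nth c (seen ps x) 0 \in seen ps x by rewrite mem_nth // ltnW.
      have m1 : nth c (seen ps x) 1 \in seen ps x by rewrite mem_nth.
      have n0 : nth c (seen ps x) 0 != c.
        by case/(seen_ok okps): m0 => ? _ _ _; rewrite eq_sym adj_neq.
      have n1 : nth c (seen ps x) 1 != c.
        by case/(seen_ok okps): m1 => ? _ _ _; rewrite eq_sym adj_neq.
      have [ux vx] : u \in seen ps x /\ v1 \in seen ps x.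
        by case: (ppair_inj uc v1c n0 n1 E) => [[-> ->]|[-> ->]].
      exists u, v1; split=> //; split=> //; right; right; exists w, x.
      by rewrite sW Es (sN _ xw) eq_sym xw ux vx !inE !eqxx ?orbT.
- have m1 : v1 \in seen ps w by rewrite Es inE eqxx.
  have m2 : v2 \in seen ps w by rewrite Es !inE eqxx orbT.
  have v1c : v1 != c by case/(seen_ok okps): m1 => ? _ _ _; rewrite eq_sym adj_neq.
  have v2c : v2 != c by case/(seen_ok okps): m2 => ? _ _ _; rewrite eq_sym adj_neq.
  have sM x : 1 < size (seen (rcons ps (u, w)) x) ->
      1 < size (seen ps x) /\ fp (seen (rcons ps (u, w)) x) = fp (seen ps x).
    case: (x =P w) => [->|/eqP xw]; last by rewrite sN.
    by rewrite sW Es.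
  split=> /=.
  + move=> x; case: (x =P w) => [->|/eqP xw]; first by rewrite sW Es I1 Es -cats1 takel_cat.
    by rewrite sN // I1.
  + by move=> x /sM [sz ->]; exact: I2.
  + exact: I3m.
  + move=> q qin cq; rewrite !inE I4m ?orbT //.
    by apply: contraTneq cq => -> /=; rewrite cw.
  + move=> x; case: (x =P w) => [->|/eqP xw].
      rewrite sW Es /= => _ a ain an.
      rewrite !inE mem_rcons inE (negbTE an) /= in ain.
      case/or3P: ain => [/eqP->|/eqP->|aT]; first exact: setU11.
        by rewrite setU1r // setU11.
      have h : ppair c v1 a \in sA st.
        by have := I5 w; rewrite Es; apply => //=; [rewrite !ltnS lt0n size_eq0; apply: contraTneq aT => -> | rewrite !inE aT !orbT].
      by rewrite !setU1r.
    by rewrite sN // => ? a ? ?; rewrite !inE I5 ?orbT.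
  + move=> x1 x2 n /sM [s1 ->] /sM [s2 ->] E.
    by rewrite !inE (I6 _ _ n s1 s2 E) !orbT.
  + have big : 2 < size (seen (rcons ps (u, w)) w) by rewrite sW Es /= size_rcons.
    have inw a : a \in [:: v1; v2; u] -> a \in seen (rcons ps (u, w)) w.
      by rewrite sW Es !inE mem_rcons inE => /or3P[] ->; rewrite ?orbT.
    move=> q; rewrite !inE => /or4P[/eqP->|/eqP->|/eqP->|/G7 //].
    * exists v1, v2; split=> //; split=> //; right; left; exists w.
      by rewrite big !inw // !inE eqxx ?orbT.
    * exists v1, u; split=> //; split=> //; right; left; exists w.
      by rewrite big !inw // !inE eqxx ?orbT.
    * exists v2, u; split=> //; split=> //; right; left; exists w.
      by rewrite big !inw // !inE eqxx ?orbT.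
Qed.


Lemma inv_fold ps : all okp ps -> inv ps (foldl (scan_step adj c) (scan_init T) ps).
Proof.
elim/last_ind: ps => [|ps p IH]; first by move=> _; exact: inv0.
move=> H; rewrite foldl_rcons; case: p H => u w H; apply: inv_step => //.
by apply: IH; move: H; rewrite all_rcons => /andP[].
Qed.

Lemma card_seq (A : {set T}) s : uniq s -> {subset s <= A} -> size s <= #|A|.
Proof.
move=> us sub; rewrite -(card_uniqP us); apply: subset_leq_card.
by apply/subsetP.
Qed.

Lemma card_other (A : {set T}) x1 x2 : x1 != x2 -> x1 \in A -> x2 \in A ->
  #|A| != 2 -> exists y, [/\ y \in A, y != x1 & y != x2].
Proof.
move=> n m1 m2 cA.
case: (boolP [exists y, [&& y \in A, y != x1 & y != x2]]) => [/existsP[y /and3P[]]|H].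
  by exists y.
have E : A = [set x1; x2].
  apply/setP => y; rewrite !inE; apply/idP/idP => [yA|/orP[]/eqP->//].
  apply: contraR H => /norP[a b]; apply/existsP; exists y; by rewrite yA a b.
by move: cA; rewrite E cards2 n.
Qed.

Lemma card3 (A : {set T}) a b d : a != b -> a != d -> b != d ->
  a \in A -> b \in A -> d \in A -> 2 < #|A|.
Proof.
move=> ab ad bd ma mb md; apply: (@card_seq A [:: a; b; d]).
  by rewrite /= !inE negb_or ab ad bd.
by move=> y; rewrite !inE => /or3P[]/eqP->.
Qed.

Lemma card2 (A : {set T}) a b : a != b -> a \in A -> b \in A -> 1 < #|A|.
Proof.
move=> ab ma mb; apply: (@card_seq A [:: a; b]); first by rewrite /= inE ab.
by move=> y; rewrite !inE => /orP[]/eqP->.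
Qed.

Lemma uc_sym v u w : unique_chordless adj v u w = unique_chordless adj v w u.
Proof.
rewrite /unique_chordless setIC; congr (_ && _); apply: eq_existsb => x.
by rewrite setIC (sym u w).
Qed.

Lemma delta_sym e f : delta adj e f -> delta adj f e.
Proof.
case/and3P=> ee ef /or3P[|dii|/eqP->]; last by rewrite /delta ef eqxx !orbT.
- case/andP=> n /existsP[v /existsP[u /existsP[w /and5P[a1 a2 e1 e2 nu]]]].
  rewrite /delta ee ef /= /delta_i eq_sym n /=; apply/orP; left.
  by apply/existsP; exists v; apply/existsP; exists w; apply/existsP; exists u;
     rewrite a1 a2 e1 e2 uc_sym nu.
- case/existsP: dii => v /existsP[u /existsP[x /existsP[w /and3P[sq e1 e2]]]].
  rewrite /delta ee ef /=; apply/orP; right; apply/orP; left.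
  apply/existsP; exists w; apply/existsP; exists x; apply/existsP; exists u;
  apply/existsP; exists v; rewrite e1 e2 !andbT.
  move: sq; rewrite /chordless_square => /and5P[s1 s2 s3 s4 /and4P[s5 s6 s7 s8]].
  rewrite (sym w x) s3 (sym x u) s2 (sym u v) s1 (sym v w) s4.
  by rewrite s6 s5 (sym x v) s8 (sym w u) s7.
Qed.

Lemma pe_edge a : adj c a -> is_edge adj (pe c a).
Proof. by move=> ca; apply/existsP; exists c; apply/existsP; exists a; rewrite ca eqxx. Qed.

Lemma primal_pe a : adj c a -> primal adj c (pe c a).
Proof. by move=> ca; apply/existsP; exists a; rewrite ca eqxx. Qed.

Lemma primalP e : primal adj c e -> exists2 u, adj c u & e = pe c u.
Proof. by case/existsP => u /andP[cu /eqP ->]; exists u. Qed.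

Lemma edge_c e : is_edge adj e -> c \in e -> primal adj c e.
Proof.
case/existsP=> x /existsP[y /andP[xy /eqP ->]]; rewrite !inE => /orP[]/eqP E.
  by rewrite -E in xy *; apply: primal_pe.
by rewrite -E in xy *; rewrite setUC; apply: primal_pe; rewrite sym.
Qed.

Lemma cin a : c \in pe c a.
Proof. by rewrite !inE eqxx. Qed.

Lemma dv_di a b : adj c a -> adj c b -> a != b ->
  ~~ unique_chordless adj c a b -> dv adj c (pe c a) (pe c b).
Proof.
move=> ca cb ab nu; rewrite /dv cin andbT /delta !pe_edge //=.
apply/orP; left; apply/andP; split.
  apply: contra ab => /eqP /pe_inj -> //; by rewrite eq_sym adj_neq.
apply/existsP; exists c; apply/existsP; exists a; apply/existsP; exists b.
by rewrite ca cb !eqxx nu.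
Qed.

Lemma lemA x a b : ~~ adj c x -> x != c -> adj c a -> adj a x -> adj c b -> adj b x ->
  a != b -> #|nbr adj c :&: nbr adj x| != 2 -> dv_star adj c (pe c a) (pe c b).
Proof.
move=> cx xc ca ax cb bx ab n2.
case: (boolP (adj a b)) => [abE|nab].
  apply: connect1; apply: dv_di => //.
  rewrite /unique_chordless abE /=; apply/nandP; right; apply/existsPn => y; by rewrite !andbF.
have ac : a != c by rewrite eq_sym adj_neq.
apply: (connect_trans (y := [set a; x])); apply: connect1.
  rewrite /dv cin andbT /delta pe_edge //=.
  have -> : is_edge adj [set a; x].
    by apply/existsP; exists a; apply/existsP; exists x; rewrite ax eqxx.
  apply/orP; left; apply/andP; split.
    apply/negP => /eqP/setP/(_ x); rewrite !inE eqxx orbT (negbTE xc) /=.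
    by rewrite eq_sym (negbTE (adj_neq ax)).
  apply/existsP; exists a; apply/existsP; exists c; apply/existsP; exists x.
  by rewrite sym ca ax /pe setUC eqxx eqxx /unique_chordless (negbTE n2).
rewrite /dv cin orbT andbT /delta pe_edge //=.
have -> : is_edge adj [set a; x].
  by apply/existsP; exists a; apply/existsP; exists x; rewrite ax eqxx.
apply/orP; right; apply/orP; left.
apply/existsP; exists a; apply/existsP; exists x; apply/existsP; exists b;
apply/existsP; exists c.
rewrite /chordless_square ax (sym x b) bx (sym b c) cb ca eq_sym ab xc.
by rewrite (sym x c) cx nab eqxx /pe setUC eqxx.
Qed.

Variables (ord : seq T) (nb : T -> seq T).
Hypothesis vo : valid_order adj c ord nb.

Definition L := [seq (u, w) | u <- ord, w <- nb u].

Lemma memL a x : ((a, x) \in L) = [&& adj c a, adj a x & x != c].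
Proof.
case: vo => _ mo mn.
apply/allpairsPdep/idP => [[u [w [uo wn [-> ->]]]]|/and3P[ca ax xc]].
  move: uo wn; rewrite mo => cu; case: (mn _ cu) => _ ->.
  by case/andP=> -> ->; rewrite cu.
exists a, x; rewrite mo ca; split=> //; case: (mn _ ca) => _ ->.
by rewrite ax xc.
Qed.

Lemma okL : all okp L.
Proof. by apply/allP => [[a x]]; rewrite memL. Qed.

Lemma uniqL : uniq L.
Proof.
case: vo => uo mo mn; apply: allpairs_uniq_dep => //.
  by move=> u; rewrite mo => /mn [].
by move=> [x1 y1] [x2 y2] _ _ /= [e1 e2]; subst.
Qed.

Definition st := scan adj c ord nb.
Definition sF x := seen L x.

Lemma invF : inv L st.
Proof. exact: inv_fold okL. Qed.

Lemma mem_sF a x : (a \in sF x) = [&& adj c a, adj a x, x != c & ~~ adj c x].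
Proof. by rewrite /sF mem_seen memL !andbA. Qed.

Lemma uniq_sF x : uniq (sF x).
Proof.
rewrite /sF /seen map_inj_in_uniq ?filter_uniq ?uniqL //.
move=> [a1 b1] [a2 b2]; rewrite !mem_filter /= => /andP[/andP[/eqP-> _] _].
by move=> /andP[/andP[/eqP-> _] _] ->.
Qed.

Lemma size_sF x : ~~ adj c x -> x != c -> size (sF x) = #|nbr adj c :&: nbr adj x|.
Proof.
move=> cx xc; rewrite -(card_uniqP (uniq_sF x)); apply: eq_card => a.
by rewrite mem_sF !inE cx xc !andbT (sym x a).
Qed.

Definition R := alpha_beta adj c st.

Lemma R_sym : symmetric R.
Proof.
move=> e f; rewrite /R /alpha_beta setUC.
by case: (primal adj c e); case: (primal adj c f).
Qed.

Lemma RA a b : adj c a -> adj c b -> ppair c a b \in sA st -> R (pe c a) (pe c b).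
Proof. by move=> ca cb h; rewrite /R /alpha_beta !primal_pe //=; rewrite /ppair in h; rewrite h orbT. Qed.

Lemma RnI a b : adj c a -> adj c b -> ppair c a b \notin sI st -> R (pe c a) (pe c b).
Proof. by move=> ca cb h; rewrite /R /alpha_beta !primal_pe //=; rewrite /ppair in h; rewrite h. Qed.

Definition Rs a b := connect R (pe c a) (pe c b).

Lemma Rs_sym a b : Rs a b -> Rs b a.
Proof. by rewrite /Rs (sym_connect_sym R_sym). Qed.

Lemma Rs_trans a b d : Rs a b -> Rs b d -> Rs a d.
Proof. exact: connect_trans. Qed.

Lemma F1 a b : adj c a -> adj c b -> adj a b -> Rs a b.
Proof.
move=> ca cb ab; apply: connect1; apply: RA => //.
case: invF => _ _ _ I4 _ _ _; apply: (I4 (a, b)) => //.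
by rewrite memL ca ab eq_sym adj_neq.
Qed.

Lemma RsBig x a b : ~~ adj c x -> x != c -> 2 < #|nbr adj c :&: nbr adj x| ->
  adj c a -> adj a x -> adj c b -> adj b x -> Rs a b.
Proof.
move=> cx xc big ca ax cb bx.
have sz : 2 < size (sF x) by rewrite size_sF.
set s0 := nth c (sF x) 0.
have m0 : s0 \in sF x by rewrite mem_nth // (ltn_trans _ sz).
have c0 : adj c s0 by move: m0; rewrite mem_sF => /and4P[].
have H z : z \in sF x -> Rs s0 z.
  move=> zin; case: (z =P s0) => [->|/eqP zn]; first exact: connect0.
  apply: connect1; apply: RA => //; first by move: zin; rewrite mem_sF => /and4P[].
  by case: invF => _ _ _ _ I5 _ _; apply: I5.
apply: (@Rs_trans _ s0); first apply: Rs_sym; apply: H; by rewrite mem_sF ?ca ?ax ?cb ?bx cx xc.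
Qed.

Lemma fp2 s a b : size s = 2 -> a \in s -> b \in s -> a != b -> fp s = ppair c a b.
Proof.
case: s => [|s0 [|s1 [|]]] //= _; rewrite !inE /fp /=.
by case/orP=> /eqP-> /orP[]/eqP->; rewrite ?eqxx // ppairC.
Qed.

Lemma nthc x i : i < size (sF x) -> nth c (sF x) i != c /\ nth c (sF x) i \in sF x.
Proof.
move=> h; have m : nth c (sF x) i \in sF x by rewrite mem_nth.
by split=> //; move: m; rewrite mem_sF => /and4P[ca _ _ _]; rewrite eq_sym adj_neq.
Qed.

Lemma fp_mem x a b : a != c -> b != c -> 1 < size (sF x) -> ppair c a b = fp (sF x) ->
  a \in sF x /\ b \in sF x.
Proof.
move=> ac bc sz E.
case: (@nthc x 0 (ltn_trans (isT : 0 < 1) sz)) => n0 m0; case: (@nthc x 1 sz) => n1 m1.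
by case: (ppair_inj ac bc n0 n1 E) => [[-> ->]|[-> ->]].
Qed.

Lemma Rs_di u v : adj c u -> adj c v -> u != v ->
  ~~ unique_chordless adj c u v -> Rs u v.
Proof.
move=> cu cv uv nu.
have uc : u != c by rewrite eq_sym adj_neq.
have vc : v != c by rewrite eq_sym adj_neq.
case: (boolP (adj u v)) => [uvE|nuv]; first exact: F1.
case: (boolP (ppair c u v \in sI st)) => [inI|nI]; last by apply: connect1; apply: RnI.
case: invF => _ _ I3 _ _ I6 _.
case: (I3 _ inI) => x [sz E]; case: (fp_mem uc vc sz E) => ux vx.
move: ux vx; rewrite !mem_sF => /and4P[_ uxE xc cx] /and4P[_ vxE _ _].
have n2 : #|nbr adj u :&: nbr adj v| != 2.
  apply: contra nu => h; rewrite /unique_chordless h /=; apply/existsP; exists x.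
  by rewrite !inE uxE vxE xc nuv cx.
have cxn : c != x by rewrite eq_sym.
have cin2 : c \in nbr adj u :&: nbr adj v by rewrite !inE (sym u c) (sym v c) cu cv.
have xin2 : x \in nbr adj u :&: nbr adj v by rewrite !inE uxE vxE.
have [y [yin yc yx]] := card_other cxn cin2 xin2 n2.
move: yin; rewrite !inE => /andP[uy vy].
case: (boolP (adj c y)) => [cy|ncy].
  apply: (@Rs_trans _ y); apply: F1 => //; by rewrite sym.
have uyy : adj u y by []. 
case: (boolP (#|nbr adj c :&: nbr adj y| == 2)) => [/eqP e2|ne2]; last first.
  apply: (RsBig ncy yc) => //; try by rewrite sym.
  have m1 : u \in nbr adj c :&: nbr adj y by rewrite !inE cu (sym y u) uy.
  have m2 : v \in nbr adj c :&: nbr adj y by rewrite !inE cv (sym y v) vy.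
  have h := card2 uv m1 m2.
  by rewrite ltn_neqAle h andbT eq_sym ne2.
have sy : size (sF y) = 2 by rewrite size_sF.
have Ey : fp (sF y) = ppair c u v.
  by apply: fp2 => //; rewrite mem_sF ?cu ?cv ?uy ?vy yc ncy.
apply: connect1; apply: RA => //.
have s2 : 1 < size (seen L y) by rewrite -/(sF y) sy.
have E' : fp (seen L y) = fp (seen L x) by rewrite -/(sF y) Ey E.
by have := I6 y x yx s2 sz E'; rewrite -/(sF y) Ey.
Qed.

Definition L1 u (g : {set T}) := exists b,
  [/\ g = [set u; b], b != c, adj u b & ~~ unique_chordless adj u c b].
Definition L2 u (g : {set T}) := exists y z,
  [/\ g = [set y; z], adj c y, ~~ adj c z, z != c & [/\ adj u z, adj y z, ~~ adj u y & u != y]].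

Lemma link u (g : {set T}) : adj c u -> c \notin g -> delta adj (pe c u) g -> L1 u g \/ L2 u g.
Proof.
move=> cu cg /and3P[_ _ /or3P[]].
- case/andP=> _ /existsP[v' /existsP[u' /existsP[w' /and5P[a1 a2 e1 e2 nu]]]].
  have /setP E1 := eqP e1; have /setP E2 := eqP e2.
  have v'g : v' \in g by rewrite E2 !inE eqxx.
  have v'c : v' != c by apply: contraTneq v'g => ->.
  have v'u : v' = u.
    by have := E1 v'; rewrite !inE eqxx (negbTE v'c) /= => /eqP.
  have u'c : u' = c.
    have := E1 u'; rewrite !inE eqxx orbT => /orP[/eqP //|/eqP u'u].
    by move: a1; rewrite v'u u'u irr.
  left; exists w'; subst v' u'; split; [exact: (eqP e2)| |exact: a2|exact: nu].
  by apply: contraNneq cg => <-; rewrite E2 !inE eqxx orbT.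
- case/existsP=> v' /existsP[u' /existsP[x' /existsP[w' /and3P[sq e1 e2]]]].
  move: sq; rewrite /chordless_square => /and5P[s1 s2 s3 s4 /and4P[s5 s6 s7 s8]].
  have /setP E1 := eqP e1.
  have := E1 c; rewrite !inE eqxx /= => /esym/orP[/eqP cv'|/eqP cu'].
  + subst v'.
    have u'u : u' = u.
      have := E1 u'; rewrite !inE eqxx orbT => /orP[/eqP u'c|/eqP //].
      by move: s1; rewrite u'c irr.
    subst u'; right; exists w', x'; split; first exact: (eqP e2).
    * by rewrite sym.
    * exact: s8.
    * exact: s5.
    * split; [exact: s2 | by rewrite sym | exact: s7 | exact: s6].
  + subst u'.
    have v'u : v' = u.
      have := E1 v'; rewrite !inE eqxx /= => /orP[/eqP v'c|/eqP //].
      by move: s1; rewrite v'c irr.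
    subst v'; right; exists x', w'; split.
    * by rewrite (eqP e2) /pe setUC.
    * exact: s2.
    * exact: s7.
    * by rewrite eq_sym.
    * split; [by rewrite sym | exact: s3 | exact: s8 | by rewrite eq_sym].
- by move/eqP=> E; rewrite -E cin in cg.
Qed.

Lemma nuc_adj v a b : adj a b -> ~~ unique_chordless adj v a b.
Proof.
move=> ab; rewrite /unique_chordless ab /=; apply/nandP; right.
by apply/existsPn => y; rewrite !andbF.
Qed.

Lemma c11 u v (g : {set T}) : adj c u -> adj c v -> u != v -> L1 u g -> L1 v g -> Rs u v.
Proof.
move=> cu cv uv [b [-> bc ub nub]] [b' [E b'c vb' _]].
have := congr1 (fun A : {set T} => u \in A) E; rewrite !inE eqxx /= => /esym/orP[/eqP uv'|/eqP ub'].
  by rewrite uv' eqxx in uv.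
have := congr1 (fun A : {set T} => v \in A) E; rewrite !inE eqxx /= => /orP[/eqP vu|/eqP vb].
  by rewrite vu eqxx in uv.
by apply: F1 => //; rewrite vb.
Qed.

Lemma c12 u v (g : {set T}) : adj c u -> adj c v -> u != v -> L1 u g -> L2 v g -> Rs u v.
Proof.
move=> cu cv uv [b [-> bc ub nub]] [y [z [E cy ncz zc [vz yz nvy vy]]]].
have uy : u = y.
  have := congr1 (fun A : {set T} => u \in A) E; rewrite !inE eqxx /= => /esym/orP[/eqP //|/eqP uz].
  by rewrite -uz cu in ncz.
have bz : b = z.
  have := congr1 (fun A : {set T} => b \in A) E; rewrite !inE eqxx orbT /= => /esym/orP[/eqP by'|/eqP //].
  by move: ub; rewrite by' -uy irr.
subst y b.
have m1 : u \in nbr adj c :&: nbr adj z by rewrite !inE cu (sym z u) ub.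
have m2 : v \in nbr adj c :&: nbr adj z by rewrite !inE cv (sym z v) vz.
have n2 : #|nbr adj c :&: nbr adj z| != 2.
  apply: contra nub => h; rewrite /unique_chordless h /=; apply/existsP; exists v.
  by rewrite m2 eq_sym uv ncz (sym u v) nvy.
apply: (RsBig ncz zc) => //.
by rewrite ltn_neqAle (card2 uv m1 m2) andbT eq_sym n2.
Qed.

Lemma c22 u v (g : {set T}) : adj c u -> adj c v -> u != v -> L2 u g -> L2 v g -> Rs u v.
Proof.
move=> cu cv uv [y [z [-> cy ncz zc [uz yz nuy uy]]]] [y' [z' [E cy' ncz' zc' [vz vy nvy vy']]]].
have yy : y = y'.
  have := congr1 (fun A : {set T} => y \in A) E; rewrite !inE eqxx /= => /esym/orP[/eqP //|/eqP yz'].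
  by rewrite -yz' cy in ncz'.
have zz : z = z'.
  have := congr1 (fun A : {set T} => z \in A) E; rewrite !inE eqxx orbT /= => /esym/orP[/eqP zy'|/eqP //].
  by rewrite zy' cy' in ncz.
subst y' z'.
apply: (RsBig ncz zc) => //.
apply: (@card3 _ u v y) => //; by rewrite !inE ?cu ?cv ?cy ?(sym z u) ?(sym z v) ?(sym z y) ?uz ?vz ?yz.
Qed.

Lemma comb u v (g : {set T}) : adj c u -> adj c v -> u != v ->
  (L1 u g \/ L2 u g) -> (L1 v g \/ L2 v g) -> Rs u v.
Proof.
move=> cu cv uv [h1|h1] [h2|h2].
- exact: c11 h1 h2.
- exact: c12 h1 h2.
- by apply: Rs_sym; apply: c12 h2 h1; rewrite // eq_sym.
- exact: c22 h1 h2.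
Qed.

Lemma R_dv e f : R e f -> dv_star adj c e f.
Proof.
rewrite /R /alpha_beta => /and3P[/primalP[a ca ->] /primalP[b cb ->]] H.
case: (a =P b) => [->|/eqP ab]; first exact: connect0.
have ac : a != c by rewrite eq_sym adj_neq.
have bc : b != c by rewrite eq_sym adj_neq.
case/orP: H => [nI|inA].
- case: (boolP (unique_chordless adj c a b)) => [uc|nuc]; last by apply: connect1; apply: dv_di.
  case/andP: uc => _ /existsP[x /and4P[xin xc nab ncx]].
  move: xin; rewrite !inE => /andP[ax bx].
  case: (boolP (#|nbr adj c :&: nbr adj x| == 2)) => [/eqP e2|ne2]; last exact: (lemA ncx xc ca ax cb bx ab ne2).
  have sz : size (sF x) = 2 by rewrite size_sF.
  have Ex : fp (sF x) = ppair c a b by apply: fp2 => //; rewrite mem_sF ?ca ?cb ?ax ?bx xc ncx.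
  case: invF => _ I2 _ _ _ _ _.
  have := I2 x; rewrite -/(sF x) sz Ex => /(_ isT) h.
  by rewrite /ppair h in nI.
- case: invF => _ _ _ _ _ _ I7; case: (I7 _ inA) => a' [b' [E G]].
  have [a'c b'c] : a' != c /\ b' != c by case: G.
  have Gab : good L a b.
    by case: (ppair_inj ac bc a'c b'c E) => [[-> ->]|[-> ->]] //; exact: good_sym.
  case: Gab => _ _ [abE|[[x [sz [ma mb]]]|[x1 [x2 [n m1 m2 m3 m4]]]]].
  + by apply: connect1; apply: dv_di => //; apply: nuc_adj.
  + rewrite -/(sF x) in sz ma mb.
    move: ma mb; rewrite !mem_sF => /and4P[_ ax xc ncx] /and4P[_ bx _ _].
    apply: (lemA ncx xc ca ax cb bx ab).
    by rewrite -size_sF // neq_ltn sz orbT.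
  + apply: connect1; apply: dv_di => //.
    rewrite -/(sF x1) -/(sF x2) !mem_sF in m1 m2 m3 m4.
    case/and4P: m1 => _ ax1 x1c _; case/and4P: m2 => _ bx1 _ _.
    case/and4P: m3 => _ ax2 x2c _; case/and4P: m4 => _ bx2 _ _.
    have h : 2 < #|nbr adj a :&: nbr adj b|.
      apply: (@card3 _ c x1 x2); rewrite ?(eq_sym c) // !inE ?ax1 ?bx1 ?ax2 ?bx2 //.
      by rewrite (sym a c) (sym b c) ca cb.
    by rewrite /unique_chordless; apply/nandP; left; rewrite neq_ltn h orbT.
Qed.

Lemma N1 u v : adj c u -> adj c v -> delta_i adj (pe c u) (pe c v) ->
  ~~ unique_chordless adj c u v.
Proof.
move=> cu cv /andP[n /existsP[v' /existsP[u' /existsP[w' /and5P[a1 a2 e1 e2 nu]]]]].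
have /setP E1 := eqP e1; have /setP E2 := eqP e2.
have uv : u != v by apply: contra n => /eqP ->.
have v'c : v' = c.
  have := E1 v'; have := E2 v'; rewrite !inE !eqxx /=.
  case/orP=> [/eqP //|/eqP v'v]; case/orP=> [/eqP //|/eqP v'u].
  by move: uv; rewrite -v'u -v'v eqxx.
subst v'.
have u'u : u' = u.
  have := E1 u'; rewrite !inE eqxx orbT => /orP[/eqP u'c|/eqP //].
  by move: a1; rewrite u'c irr.
have w'v : w' = v.
  have := E2 w'; rewrite !inE eqxx orbT => /orP[/eqP w'c|/eqP //].
  by move: a2; rewrite w'c irr.
by subst u' w'.
Qed.

Lemma N2 u v : delta_ii adj (pe c u) (pe c v) -> False.
Proof.
case/existsP=> v' /existsP[u' /existsP[x' /existsP[w' /and3P[sq e1 e2]]]].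
move: sq; rewrite /chordless_square => /and5P[s1 s2 s3 s4 /and4P[s5 s6 s7 s8]].
have h1 : c \in [set v'; u'] by rewrite -(eqP e1) cin.
have h2 : c \in [set w'; x'] by rewrite -(eqP e2) cin.
rewrite !inE in h1 h2.
case/orP: h1 => /eqP E1; case/orP: h2 => /eqP E2.
- by move: s4; rewrite -E1 -E2 irr.
- by move: s5; rewrite -E1 -E2 eqxx.
- by move: s6; rewrite -E1 -E2 eqxx.
- by move: s2; rewrite -E1 -E2 irr.
Qed.

Definition inS e0 g := (primal adj c g && connect R e0 g) ||
  ((c \notin g) && [exists k, [&& primal adj c k, connect R e0 k & delta adj k g]]).

Lemma inS_step (e0 g h : {set T}) : inS e0 g -> dv adj c g h -> inS e0 h.
Proof.
case/orP => [/andP[/primalP[u cu ->] Cg]|/andP[cg /existsP[k /and3P[/primalP[u cu ->] Ck dkg]]]] /andP[dgh cgh].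
- case: (boolP (c \in h)) => ch.
  + have eh : is_edge adj h by case/and3P: dgh.
    have /primalP[v cv Eh] := edge_c eh ch; subst h.
    apply/orP; left; rewrite primal_pe //=.
    case: (u =P v) => [<-//|/eqP uv].
    apply: connect_trans Cg _.
    case/and3P: dgh => _ _ /or3P[di|dii|/eqP E].
    * by apply: Rs_di => //; apply: N1.
    * by case: (N2 dii).
    * by move: uv; rewrite (pe_inj _ E) ?eqxx // eq_sym adj_neq.
  + apply/orP; right; rewrite ch /=; apply/existsP; exists (pe c u).
    by rewrite primal_pe // Cg dgh.
- have ch : c \in h by move: cgh; rewrite (negbTE cg).
  have eh : is_edge adj h by case/and3P: dgh.
  have /primalP[v cv Eh] := edge_c eh ch; subst h.
  apply/orP; left; rewrite primal_pe //=.
  case: (u =P v) => [<-//|/eqP uv].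
  apply: connect_trans Ck _.
  exact: (comb cu cv uv (link cu cg dkg) (link cv cg (delta_sym dgh))).
Qed.

Lemma inS_path (e0 : {set T}) p g : path (dv adj c) g p -> inS e0 g -> inS e0 (last g p).
Proof.
elim: p g => [|h p IH] g //= /andP[st' pth] Sg; exact: IH pth (inS_step Sg st').
Qed.

Lemma main_sec (e f : {set T}) : is_edge adj e -> c \in e -> c \in f ->
  (connect R e f <-> dv_star adj c e f).
Proof.
move=> ee ce cf; split.
- case/connectP => p pth Ef; rewrite Ef; clear Ef cf.
  elim: p e pth {ee ce} => [|h p IH] g /=; first by move=> _; exact: connect0.
  case/andP => Rgh pth; exact: connect_trans (R_dv Rgh) (IH _ pth).
- have S0 : inS e e by rewrite /inS edge_c // connect0.
  case/connectP => p pth Ef.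
  have := inS_path pth S0; rewrite -Ef.
  by case/orP => [/andP[]//|/andP[nf _]]; rewrite cf in nf.
Qed.

End Pf.

Unset Implicit Arguments.

Theorem mainTheorem6 (T : finType) (adj : rel T) :
  symmetric adj -> irreflexive adj ->
  (forall x y : T, connect adj x y) ->
  forall (c : T) (ord : seq T) (nb : T -> seq T),
  valid_order adj c ord nb ->
  forall e f : {set T},
  is_edge adj e -> is_edge adj f -> c \in e -> c \in f -> e != f ->
  (connect (alpha_beta adj c (scan adj c ord nb)) e f <-> dv_star adj c e f).
Proof.
move=> sym irr _ c ord nb vo e f ee ef ce cf nef.
exact: (main_sec sym irr vo ee ce cf).
Qed.
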